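(* Consider the map $f_{\mathrm{IbM}}(X)=\operatorname{diag}(|X|\mathbf{1}_n)^{-1}XX$ (the system $X(t+1)=f_{\mathrm{IbM}}(X(t))$) on the domain $\mathcal{S}^{+}_{\mathrm{rs\text{-}symm}}$. Define $Q_{\mathrm{IbM}}$ as the set of matrices $PYP^{\top}\in\mathcal{S}^{+}_{\mathrm{rs\text{-}symm}}$ where $P$ is an $n\times n$ permutation matrix and $Y$ is block diagonal with each diagonal block of the form $\operatorname{sign}(w)w^{\top}$, $w\in\mathbb{R}^m$, $|w|\succ\mathbf{0}_m$, $m\le n$ (block sizes summing to $n$). Then: (i) $Q_{\mathrm{IbM}}$ is the set of all fixed points of $f_{\mathrm{IbM}}$ in $\mathcal{S}^{+}_{\mathrm{rs\text{-}symm}}$; (ii) for every $X\in Q_{\mathrm{IbM}}$, $G(X)$ is composed of isolated complete subgraphs that satisfy social balance, i.e., there is a partition of $\{1,\dots,n\}$ into sets $V_1,\dots,V_K$ such that $X_{ij}=0$ whenever $i,j$ lie in different sets, and for each $k$ the principal submatrix of $X$ indexed by $V_k$ has all entries non-zero and its graph satisfies social balance.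
   Context: $|X|$ is entry-wise absolute value, $\mathbf{1}_n$ the all-ones vector, $\operatorname{sign}$ entry-wise sign, $\succ$ entry-wise strict inequality. $\mathcal{S}^{+}_{\mathrm{rs\text{-}symm}}=\{X\in\mathbb{R}^{n\times n}:\operatorname{sign}(X)=\operatorname{sign}(X)^{\top},\ X_{ii}>0\ \forall i,\ \exists\gamma\succ\mathbf{0}_n\text{ with }\operatorname{diag}(\gamma)X=(\operatorname{diag}(\gamma)X)^{\top}\}$. $G(Z)$ is the weighted digraph with adjacency matrix $Z$; it satisfies social balance if $Z_{ii}>0$ for all $i$ and $\operatorname{sign}(Z_{ij})\operatorname{sign}(Z_{jk})\operatorname{sign}(Z_{ki})=1$ for all $i,j,k$. *)

(* Defs.v *)
From HB Require Import structures.
From mathcomp Require Import all_boot all_order all_algebra.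
Set Implicit Arguments. Unset Strict Implicit. Unset Printing Implicit Defensive.
Import Order.TTheory GRing.Theory Num.Theory.
Local Open Scope ring_scope.

Definition absmx (R : realFieldType) m p (X : 'M[R]_(m, p)) : 'M[R]_(m, p) :=
  map_mx (fun x => `|x|) X.
Definition sgmx (R : realFieldType) m p (X : 'M[R]_(m, p)) : 'M[R]_(m, p) :=
  map_mx (fun x => Num.sg x) X.

Definition f_IbM (R : realFieldType) n (X : 'M[R]_n) : 'M[R]_n :=
  invmx (diag_mx ((absmx X *m const_mx 1 : 'cV[R]_n)^T)) *m X *m X.

Definition S_rs_symm (R : realFieldType) n (X : 'M[R]_n) : Prop :=
  [/\ sgmx X = (sgmx X)^T,
      (forall i, 0 < X i i) &
      exists gamma : 'cV[R]_n,
        (forall i, 0 < gamma i 0) /\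
        diag_mx gamma^T *m X = (diag_mx gamma^T *m X)^T].

Definition Q_IbM (R : realFieldType) n (X : 'M[R]_n) : Prop :=
  S_rs_symm X /\
  exists (P : 'M[R]_n) (K : nat) (p : 'I_K -> nat)
         (E : (\sum_(k < K) p k)%N = n) (w : forall k : 'I_K, 'cV[R]_(p k)),
    [/\ is_perm_mx P,
        (forall k, 0 < p k)%N,
        (forall k i, 0 < `|w k i 0|) &
        X = P *m castmx (E, E) (\mxdiag_(k < K) (sgmx (w k) *m (w k)^T)) *m P^T].

Definition social_balance (R : realFieldType) m (Z : 'M[R]_m) : Prop :=
  (forall i, 0 < Z i i) /\
  (forall i j k, Num.sg (Z i j) * Num.sg (Z j k) * Num.sg (Z k i) = 1).

Definition principal_submx (R : realFieldType) n (X : 'M[R]_n) (A : {set 'I_n})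
  : 'M[R]_#|A| :=
  \matrix_(i < #|A|, j < #|A|) X (enum_val i) (enum_val j).

(* Main.v *)
Require Import Defs.
From HB Require Import structures.
From mathcomp Require Import all_boot all_order all_algebra.
From mathcomp Require Import ring fingroup perm.
Set Implicit Arguments. Unset Strict Implicit. Unset Printing Implicit Defensive.
Import Order.TTheory GRing.Theory Num.Theory.
Local Open Scope ring_scope.

Definition Struct (R : realFieldType) n (X : 'M[R]_n) : Prop :=
  (forall i, 0 < X i i) /\
  (forall i j k, X i j != 0 -> X i k = Num.sg (X i j) * X j k).

Lemma sg_sq (R : realFieldType) (x : R) : x != 0 -> Num.sg x * Num.sg x = 1.
Proof. by case: sgrP => //= _ _; rewrite ?mulrNN mulr1. Qed.

Section StructFacts.
Variables (R : realFieldType) (n : nat) (X : 'M[R]_n).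
Hypothesis HS : Struct X.

Lemma st_diag i : X i i != 0.
Proof. by case: HS => h _; rewrite gt_eqF ?h. Qed.

Lemma st_sym i j : X i j != 0 -> X j i != 0 /\ Num.sg (X j i) = Num.sg (X i j).
Proof.
case: HS => hd hr h; have e := hr i j i h.
have hji : X j i != 0.
  by apply/eqP => h0; move: e; rewrite h0 mulr0; apply/eqP; apply: st_diag.
split=> //.
have : Num.sg (X i i) = Num.sg (X i j) * Num.sg (X j i) by rewrite {1}e sgr_smul.
rewrite gtr0_sg ?hd // => e1.
by rewrite -[LHS]mul1r -(sg_sq h) -mulrA -e1 mulr1.
Qed.

Lemma st_rel i j k : X i j != 0 -> (X i k != 0) = (X j k != 0).
Proof.
case: HS => hd hr h; rewrite (hr i j k h) mulf_eq0 sgr_eq0 (negbTE h) //.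
Qed.

End StructFacts.

Definition dvec (R : realFieldType) n (X : 'M[R]_n) : 'rV[R]_n :=
  (absmx X *m const_mx 1 : 'cV[R]_n)^T.

Lemma dvecE (R : realFieldType) n (X : 'M[R]_n) i :
  dvec X 0 i = \sum_j `|X i j|.
Proof. by rewrite /dvec !mxE; apply: eq_bigr => j _; rewrite !mxE mulr1. Qed.

Lemma dvec_unit (R : realFieldType) n (X : 'M[R]_n) :
  (forall i, 0 < X i i) -> diag_mx (dvec X) \in unitmx.
Proof.
move=> hd; rewrite unitmxE det_diag unitfE; apply/prodf_neq0 => i _.
rewrite dvecE; apply: lt0r_neq0.
rewrite (bigD1 i) //= ltr_wpDr ?sumr_ge0 // normr_gt0 lt0r_neq0 //.
Qed.

Lemma fIbM_iff (R : realFieldType) n (X : 'M[R]_n) :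
  (forall i, 0 < X i i) ->
  (f_IbM X = X <-> forall i k, dvec X 0 i * X i k = \sum_j X i j * X j k).
Proof.
move=> hd; have hu := dvec_unit hd.
have -> : f_IbM X = invmx (diag_mx (dvec X)) *m (X *m X) by rewrite /f_IbM mulmxA.
split=> [e i k | h].
  have : diag_mx (dvec X) *m X = X *m X by have e2 := congr1 (mulmx (diag_mx (dvec X))) e; rewrite mulKVmx // in e2; exact: esym e2.
  by move/matrixP/(_ i k); rewrite mul_diag_mx !mxE.
have <- : diag_mx (dvec X) *m X = X *m X.
  by apply/matrixP => i k; rewrite mul_diag_mx [LHS]mxE h [RHS]mxE.
by rewrite mulKmx.
Qed.

Lemma struct_fix (R : realFieldType) n (X : 'M[R]_n) : Struct X -> f_IbM X = X.
Proof.
move=> hS; have [hd hr] := hS; apply/fIbM_iff => // i k.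
rewrite dvecE mulr_suml; apply: eq_bigr => j _.
have [->|h] := eqVneq (X i j) 0; first by rewrite normr0 !mul0r.
by rewrite (hr i j k h) mulrA [`|_| * _]mulrC mulr_sg_norm.
Qed.

Lemma fix_struct (R : realFieldType) n (X : 'M[R]_n) :
  S_rs_symm X -> f_IbM X = X -> Struct X.
Proof.
case=> _ hd [g [hg hsym]] /(fIbM_iff hd) hfix; split=> // i j k hij.
pose S a b := g a 0 * X a b.
have Ssym a b : S a b = S b a.
  by move/matrixP: hsym => /(_ a b); rewrite mul_diag_mx !mxE.
pose v a := X a k.
pose t a b := `|S a b| * (v a - Num.sg (X a b) * v b) ^+ 2.
pose A a b := `|S a b| * v a ^+ 2.
pose B a b := S a b * v a * v b.
have tE a b : t a b = A a b - B a b *+ 2 + A b a.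
  rewrite /t /A /B -(Ssym a b).
  have [e|h] := eqVneq (X a b) 0.
    by rewrite /S e mulr0 normr0 !mul0r mul0rn subr0 addr0.
  have hn : `|S a b| * Num.sg (X a b) = S a b.
    by rewrite /S normrM gtr0_norm ?hg // -mulrA [`|X a b| * _]mulrC mulr_sg_norm.
  have s2 : Num.sg (X a b) ^+ 2 = 1 by rewrite sqr_sg h.
  have eq : forall N s0 x y : R, N * (x - s0 * y) ^+ 2 = N * x ^+ 2 - N * s0 * x * y *+ 2 + N * s0 ^+ 2 * y ^+ 2.
    by move=> N s0 x y; ring.
  by rewrite eq hn s2 mulr1.
have rowE a : \sum_b A a b = \sum_b B a b.
  transitivity (g a 0 * v a * (dvec X 0 a * X a k)).
    rewrite /A -mulr_suml.
    have -> : \sum_b `|S a b| = g a 0 * dvec X 0 a.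
      by rewrite dvecE mulr_sumr; apply: eq_bigr => b _; rewrite /S normrM gtr0_norm ?hg.
    by rewrite /v; ring.
  rewrite hfix mulr_sumr; apply: eq_bigr => b _; rewrite /B /S /v; ring.
have tot : \sum_a \sum_b t a b = 0.
  transitivity (\sum_a (\sum_b A a b - (\sum_b B a b) *+ 2 + \sum_b A b a)).
    apply: eq_bigr => a _; rewrite -sumrMnl -sumrN -!big_split; apply: eq_bigr => b _.
    exact: tE.
  have ex : \sum_a \sum_b A b a = \sum_a \sum_b A a b by rewrite exchange_big.
  rewrite !big_split /= sumrN sumrMnl ex.
  have -> : \sum_a \sum_b A a b = \sum_a \sum_b B a b by apply: eq_bigr => a _; apply: rowE.
  ring.
have t0 a b : t a b = 0.
  move/eqP: tot; rewrite psumr_eq0 => [/allP/(_ a (mem_index_enum _))/= |]; last first.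
    by move=> x _; apply: sumr_ge0 => y _; rewrite /t mulr_ge0 ?sqr_ge0.
  rewrite psumr_eq0 => [/allP/(_ b (mem_index_enum _))/= /eqP //|].
  by move=> y _; rewrite /t mulr_ge0 ?sqr_ge0.
have := t0 i j; rewrite /t; move/eqP; rewrite mulf_eq0 normr_eq0 /S mulf_eq0.
rewrite (negbTE hij) gt_eqF ?hg //= sqrf_eq0 subr_eq0 => /eqP.
by rewrite /v.
Qed.

Section Classes.
Variables (R : realFieldType) (n : nat) (X : 'M[R]_n).
Hypothesis HS : Struct X.

Definition Xrel : rel 'I_n := fun i j => X i j != 0.
Definition cls i := [set y in [set: 'I_n] | Xrel i y].
Definition Vp := equivalence_partition Xrel [set: 'I_n].

Lemma in_cls i j : (j \in cls i) = (X i j != 0).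
Proof. by rewrite !inE. Qed.

Lemma cls_eq i j : X i j != 0 -> cls i = cls j.
Proof. by move=> h; apply/setP => y; rewrite !in_cls (st_rel HS y h). Qed.

Lemma memVp A : A \in Vp -> exists i, A = cls i.
Proof. by case/imsetP => i _ ->; exists i. Qed.

Lemma cls_Vp i : cls i \in Vp.
Proof. by apply/imsetP; exists i. Qed.

Lemma Vp_partition : partition Vp [set: 'I_n].
Proof.
apply: equivalence_partitionP => x y z _ _ _; split.
  by rewrite /Xrel st_diag.
by move=> h; rewrite /Xrel (st_rel HS z h).
Qed.

Lemma sgX3 a b c : X a b != 0 -> X b c != 0 ->
  Num.sg (X a b) * Num.sg (X b c) * Num.sg (X c a) = 1.
Proof.
move=> hab hbc; have hac : X a c != 0 by rewrite (st_rel HS c hab).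
have [_ ->] := st_sym HS hac.
case: HS => _ hr; rewrite -sgr_smul -(hr a b c hab); exact: sg_sq.
Qed.

Lemma part2 : exists V : {set {set 'I_n}},
       [/\ partition V [set: 'I_n],
           (forall A B, A \in V -> B \in V -> A != B ->
              forall i j, i \in A -> j \in B -> X i j = 0),
           (forall A, A \in V -> forall i j, i \in A -> j \in A -> X i j != 0) &
           (forall A, A \in V -> social_balance (principal_submx X A))].
Proof.
have hA A i j : A \in Vp -> i \in A -> j \in A -> X i j != 0.
  move=> /memVp [a ->]; rewrite !in_cls => hi hj.
  by rewrite -(st_rel HS j hi).
exists Vp; split.
- exact: Vp_partition.
- move=> A B /memVp [a ->] /memVp [b ->] hne i j; rewrite !in_cls => hi hj.
  have [//|hij] := eqVneq (X i j) 0.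
  by move/negP: hne; case; rewrite (cls_eq hi) (cls_eq hj) (cls_eq hij).
- by move=> A hAV i j; apply: hA.
- move=> A hAV; split=> [i|i j k]; rewrite !mxE.
    by case: HS => hd _; apply: hd.
  by apply: sgX3; apply: (hA _ _ _ hAV); apply: enum_valP.
Qed.

End Classes.

Lemma struct_ext (R : realFieldType) m n (X : 'M[R]_m) (A : 'M[R]_n) (f : 'I_m -> 'I_n) :
  (forall i j, X i j = A (f i) (f j)) -> Struct A -> Struct X.
Proof.
move=> e [hd hr]; split=> [i|i j k]; rewrite !e //.
exact: hr.
Qed.

Lemma perm_conjE (R : realFieldType) n (s : {perm 'I_n}) (Y : 'M[R]_n) i j :
  (perm_mx s *m Y *m (perm_mx s)^T) i j = Y (s i) (s j).
Proof. by rewrite tr_perm_mx -col_permE -row_permE !mxE. Qed.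

Lemma mxdiag_rank (R : realFieldType) K (p : 'I_K -> nat) (w : forall k, 'cV[R]_(p k))
   (x y : sigT (fun k : 'I_K => 'I_(p k))) :
  (\mxdiag_(k < K) (sgmx (w k) *m (w k)^T)) (tagnat.rank x) (tagnat.rank y) =
  if tag x == tag y then Num.sg (w (tag x) (tagged x) 0) * w (tag y) (tagged y) 0 else 0.
Proof.
rewrite /mxdiag /mxblock mxE /tagnat.sig1 /tagnat.sig2 !tagnat.rankK.
case: x => i a; case: y => j b /=.
case: eqP => e; last by rewrite mxE.
subst j; rewrite conform_mx_id !mxE big_ord1 !mxE //.
Qed.

Lemma struct_mxdiag (R : realFieldType) K (p : 'I_K -> nat) (w : forall k, 'cV[R]_(p k)) :
  (forall k i, 0 < `|w k i 0|) ->
  Struct (\mxdiag_(k < K) (sgmx (w k) *m (w k)^T)).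
Proof.
move=> hw; split=> [s|s t u].
  rewrite -(tagnat.sigK s) mxdiag_rank eqxx.
  by rewrite -normrEsg.
have [x ->] : exists x, s = tagnat.rank x by exists (tagnat.sig s); rewrite tagnat.sigK.
have [y ->] : exists y, t = tagnat.rank y by exists (tagnat.sig t); rewrite tagnat.sigK.
have [z ->] : exists z, u = tagnat.rank z by exists (tagnat.sig u); rewrite tagnat.sigK.
rewrite !mxdiag_rank.
case: x => i a; case: y => j b; case: z => l c /=.
have [eij|nij] := eqVneq i j; last by rewrite eqxx.
subst j => hxy; rewrite sgr_smul.
case: eqP => _; last by rewrite mulr0.
by rewrite mulrA -(mulrA (Num.sg _)) sg_sq ?mulr1 // -normr_gt0.
Qed.

Lemma Q_struct (R : realFieldType) n (X : 'M[R]_n) : Q_IbM X -> Struct X.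
Proof.
case=> _ [P [K [p [E [w [/is_perm_mxP [s ->] _ hw ->]]]]]].
apply: (@struct_ext _ _ _ _ _ (fun i => cast_ord (esym E) (s i))).
  by move=> i j; rewrite perm_conjE castmxE.
exact: struct_mxdiag.
Qed.

Section Construct.
Variables (R : realFieldType) (n : nat) (X : 'M[R]_n).
Hypothesis HS : Struct X.

Lemma sameC A i j : A \in Vp X -> i \in A -> j \in A -> X i j != 0.
Proof.
move=> /memVp [a ->]; rewrite !in_cls => hi hj.
by rewrite -(st_rel HS j hi).
Qed.

Definition K := #|Vp X|.
Definition C (k : 'I_K) : {set 'I_n} := enum_val k.
Definition p (k : 'I_K) : nat := #|C k|.

Lemma CV k : C k \in Vp X.
Proof. exact: enum_valP. Qed.

Lemma sumE : (\sum_(k < K) p k)%N = n.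
Proof.
rewrite /p /C -(big_enum_val (fun A : {set 'I_n} => #|A|)) /=.
by rewrite -(card_partition (Vp_partition HS)) cardsT card_ord.
Qed.

Lemma pk_gt0 k : (0 < p k)%N.
Proof.
have [a ea] := memVp (CV k).
apply/card_gt0P; exists a; rewrite ea in_cls; exact: st_diag.
Qed.

Definition kof (i : 'I_n) : 'I_K := enum_rank_in (cls_Vp X i) (cls X i).

Lemma C_kof i : C (kof i) = cls X i.
Proof. by rewrite /C /kof enum_rankK_in // cls_Vp. Qed.

Lemma in_C_kof i : i \in C (kof i).
Proof. by rewrite C_kof in_cls; exact: st_diag. Qed.

Definition pos (i : 'I_n) : 'I_(p (kof i)) := enum_rank_in (in_C_kof i) i.
Definition tau (i : 'I_n) : {k : 'I_K & 'I_(p k)} := Tagged (fun k => 'I_(p k)) (pos i).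
Definition iota (x : {k : 'I_K & 'I_(p k)}) : 'I_n := enum_val (tagged x).

Lemma iota_tau i : iota (tau i) = i.
Proof. by rewrite /iota /= /pos enum_rankK_in // in_C_kof. Qed.

Definition sf (i : 'I_n) : 'I_n := cast_ord sumE (tagnat.rank (tau i)).

Lemma sf_inj : injective sf.
Proof.
move=> i j /cast_ord_inj /tagnat.rank_inj e.
by rewrite -(iota_tau i) -(iota_tau j) e.
Qed.

Definition sg_perm : {perm 'I_n} := perm sf_inj.
Definition rep (k : 'I_K) : 'I_n := enum_val (Ordinal (pk_gt0 k)).
Definition w (k : 'I_K) : 'cV[R]_(p k) := \col_a X (rep k) (enum_val a).

Lemma w_nz k a : 0 < `|w k a 0|.
Proof. by rewrite mxE normr_gt0; apply: (sameC (CV k)); apply: enum_valP. Qed.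

Lemma X_decomp :
  X = perm_mx sg_perm *m castmx (sumE, sumE) (\mxdiag_(k < K) (sgmx (w k) *m (w k)^T))
      *m (perm_mx sg_perm)^T.
Proof.
apply/matrixP => i j; rewrite perm_conjE castmxE !permE /sf /= !cast_ordK.
rewrite mxdiag_rank /= !mxE.
have ei : enum_val (pos i) = i := iota_tau i.
have ej : enum_val (pos j) = j := iota_tau j.
rewrite ei ej.
have [e|ne] := eqVneq (kof i) (kof j).
  have hr : rep (kof i) \in C (kof i) by apply: enum_valP.
  have hri : X (rep (kof i)) i != 0.
    by apply: (sameC (CV (kof i))) => //; apply: in_C_kof.
  have hir : X i (rep (kof i)) != 0 by have [] := st_sym HS hri.
  case: HS => _ hrel.
  rewrite (hrel i _ j hir) -e.
  by have [_ ->] := st_sym HS hri.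
have [//|hij] := eqVneq (X i j) 0.
case/negP: ne; apply/eqP/enum_val_inj.
by have := C_kof i; have := C_kof j; rewrite /C => -> ->; apply: cls_eq.
Qed.

End Construct.

Lemma struct_Q (R : realFieldType) n (X : 'M[R]_n) :
  S_rs_symm X -> Struct X -> Q_IbM X.
Proof.
move=> hS hst; split=> //.
exists (perm_mx (sg_perm hst)), _, _, (sumE hst), (w hst); split.
- exact: perm_mx_is_perm.
- exact: pk_gt0.
- exact: w_nz.
- exact: X_decomp.
Qed.

Theorem theorem4p4 (R : realFieldType) (n : nat) :
  (* (i) Q_IbM is exactly the set of fixed points of f_IbM in S^+_{rs-symm} *)
  (forall X : 'M[R]_n, Q_IbM X <-> (S_rs_symm X /\ f_IbM X = X)) /\
  (* (ii) isolated, complete, socially balanced subgraphs *)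
  (forall X : 'M[R]_n, Q_IbM X ->
     exists V : {set {set 'I_n}},
       [/\ partition V [set: 'I_n],
           (forall A B, A \in V -> B \in V -> A != B ->
              forall i j, i \in A -> j \in B -> X i j = 0),
           (forall A, A \in V -> forall i j, i \in A -> j \in A -> X i j != 0) &
           (forall A, A \in V -> social_balance (principal_submx X A))]).
Proof.
split.
- move=> X; split.
  + move=> hQ; split; first by case: hQ.
    exact: struct_fix (Q_struct hQ).
  + by case=> hS hf; apply: struct_Q hS (fix_struct hS hf).
- by move=> X hQ; apply: part2 (Q_struct hQ).
Qed.
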